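(* Let $\Lambda$ be a row-finite $k$-graph with no sources and $R$ a commutative ring with $1$. Let $(\alpha,\beta)\in\Sigma$ and $x\in\mathfrak{T}_\Lambda$. (a) If $x\notin F_{\alpha,\beta}$, then there exist $\mu,\nu\in\Lambda$ such that $x\in Z(\mu)\cap Z(\nu)$ and $s_\mu s_{\mu^*}s_\alpha s_{\beta^*}s_\nu s_{\nu^*}=0$ in ${\rm KP}_R(\Lambda)$. (b) If $x\in F_{\alpha,\beta}$, then there exists $\gamma\in\Lambda$ with $x\in Z(\alpha\gamma)\cap Z(\beta\gamma)$, $s_{\alpha\gamma}s_{(\alpha\gamma)^*}s_\alpha s_{\beta^*}s_{\beta\gamma}s_{(\beta\gamma)^*}=s_{\alpha\gamma}s_{(\beta\gamma)^*}$, and $(\alpha\gamma,\beta\gamma)$ a cycline pair.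
   Context: A $k$-graph is a countable category $\Lambda$ (vertices $\Lambda^0$, paths, maps $r,s$) with a degree functor $d:\Lambda\to\mathbb{N}^k$ satisfying unique factorization: if $d(\lambda)=m+n$ there are unique $\mu,\nu$ with $s(\mu)=r(\nu)$, $d(\mu)=m,d(\nu)=n$, $\lambda=\mu\nu$. $v\Lambda=\{\lambda:r(\lambda)=v\}$, $v\Lambda^n$ those of degree $n$; row-finite with no sources means each $v\Lambda^n$ is finite and nonempty. ${\rm KP}_R(\Lambda)$ is the universal $R$-algebra generated by $p_v$ ($v\in\Lambda^0$), $s_\lambda,s_{\lambda^*}$ ($d(\lambda)\ne0$) with relations (KP1) $p_v$ mutually orthogonal idempotents; (KP2) $s_\lambda s_\mu=s_{\lambda\mu}$, $s_{\mu^*}s_{\lambda^*}=s_{(\lambda\mu)^*}$, $p_{r(\lambda)}s_\lambda=s_\lambda=s_\lambda p_{s(\lambda)}$, $p_{s(\lambda)}s_{\lambda^*}=s_{\lambda^*}=s_{\lambda^*}p_{r(\lambda)}$ when $r(\mu)=s(\lambda)$; (KP3) $s_{\lambda^*}s_\mu=\delta_{\lambda,\mu}p_{s(\lambda)}$ when $d(\lambda)=d(\mu)$; (KP4) $p_v=\sum_{\lambda\in v\Lambda^n}s_\lambda s_{\lambda^*}$ for $n\ne0$. Convention $s_v=s_{v^*}=p_v$. A pair $(\alpha,\beta)$ with $s(\alpha)=s(\beta)$ is cycline if $s_{\alpha\gamma}s_{(\alpha\gamma)^*}=s_{\beta\gamma}s_{(\beta\gamma)^*}$ for all $\gamma\in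 s(\alpha)\Lambda$. Let $\Omega_k$ be the $k$-graph with objects $\mathbb{N}^k$, morphisms $\{(p,q):p\le q\}$, $r(p,q)=p$, $s(p,q)=q$, $(p,q)(q,t)=(p,t)$, $d(p,q)=q-p$. An infinite path is a degree-preserving functor $x:\Omega_k\to\Lambda$; $\Lambda^\infty$ is the set of infinite paths. For $\mu\in\Lambda$, $Z(\mu)=\{x\in\Lambda^\infty: x(0,d(\mu))=\mu\}$; these cylinder sets form a basis of compact open sets for a Hausdorff topology on $\Lambda^\infty$. For $p\in\mathbb{N}^k$, $\sigma^p:\Lambda^\infty\to\Lambda^\infty$ is $\sigma^p(x)(m,n)=x(m+p,n+p)$. Let $\Sigma=\{(\alpha,\beta)\in\Lambda\times\Lambda: s(\alpha)=s(\beta),\ \alpha\ne\beta\}$; for $(\alpha,\beta)\in\Sigma$ let $F_{\alpha,\beta}=\{x\in Z(\alpha)\cap Z(\beta): \sigma^{d(\alpha)}(x)=\sigma^{d(\beta)}(x)\}$. The set of regular paths is $\mathfrak{T}_\Lambda=\Lambda^\infty\setminus\bigcup_{(\alpha,\beta)\in\Sigma}\partial F_{\alpha,\beta}$, where $\partial$ denotes topological boundary. *)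

(* Defs.v *)
From HB Require Import structures.
From mathcomp Require Import all_boot all_order all_algebra.
From Stdlib Require Import List.
Set Implicit Arguments. Unset Strict Implicit. Unset Printing Implicit Defensive.
Import GRing.Theory.
Local Open Scope ring_scope.

Definition NN (k : nat) := {ffun 'I_k -> nat}.
Definition nzero {k} : NN k := [ffun => 0%N].
Definition nadd {k} (m n : NN k) : NN k := [ffun i => (m i + n i)%N].
Definition nsub {k} (m n : NN k) : NN k := [ffun i => (m i - n i)%N].
Definition nle {k} (m n : NN k) : Prop := forall i, (m i <= n i)%N.

(* k-graphs: countable categories with a degree functor into N^k      *)
(* satisfying unique factorisation.  The (partial) composition is      *)
(* encoded by a total function [pcat], constrained only on composable  *)
(* pairs; [pcat mu nu] is the path "mu nu" (mu followed by nu, with    *)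
(* s(mu) = r(nu)).                                                     *)
Record kgraph (k : nat) := KGraph {
  Vx : Type;
  Pth : Type;
  rg : Pth -> Vx;
  sc : Pth -> Vx;
  idp : Vx -> Pth;
  pcat : Pth -> Pth -> Pth;
  dg : Pth -> NN k;
  Vx_countable : exists f : Vx -> nat, injective f;
  Pth_countable : exists f : Pth -> nat, injective f;
  rg_idp : forall v, rg (idp v) = v;
  sc_idp : forall v, sc (idp v) = v;
  pcomp_idl : forall l, pcat (idp (rg l)) l = l;
  pcomp_idr : forall l, pcat l (idp (sc l)) = l;
  rg_comp : forall m n, sc m = rg n -> rg (pcat m n) = rg m;
  sc_comp : forall m n, sc m = rg n -> sc (pcat m n) = sc n;
  comp_assoc : forall a b c, sc a = rg b -> sc b = rg c ->
      pcat (pcat a b) c = pcat a (pcat b c);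
  dg_idp : forall v, dg (idp v) = nzero;
  dg_comp : forall m n, sc m = rg n -> dg (pcat m n) = nadd (dg m) (dg n);
  factor_ex : forall l (m n : NN k), dg l = nadd m n ->
      exists mu nu, sc mu = rg nu /\ dg mu = m /\ dg nu = n /\ l = pcat mu nu;
  factor_uniq : forall mu nu mu' nu',
      sc mu = rg nu -> sc mu' = rg nu' ->
      dg mu = dg mu' -> dg nu = dg nu' -> pcat mu nu = pcat mu' nu' ->
      mu = mu' /\ nu = nu'
}.

Arguments rg {k L} _ : rename.
Arguments sc {k L} _ : rename.
Arguments idp {k L} _ : rename.
Arguments pcat {k L} _ _ : rename.
Arguments dg {k L} _ : rename.

Definition row_finite_no_sources {k} (L : kgraph k) : Prop :=
  forall (v : Vx L) (n : NN k),
    (exists l : list (Pth L), forall lam, In lam l <-> (rg lam = v /\ dg lam = n))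
    /\ (exists lam : Pth L, rg lam = v /\ dg lam = n).

(* Kumjian-Pask families in (unital) R-algebras.  An identity holds in  *)
(* KP_R(Lambda) iff it holds for every Kumjian-Pask family in every     *)
(* R-algebra (universal property; the nonunital universal algebra       *)
(* embeds in its unitisation).  Convention s_v = s_{v^*} = p_v is built *)
(* in: p_v := ks (idp v), and ks/kss are defined on all paths.          *)
Record KPfamily {k} (L : kgraph k) (R : comNzRingType) (A : algType R) := KPFam {
  ks : Pth L -> A;
  kss : Pth L -> A;
  kp := fun v => ks (idp v);
  KP0 : forall v, kss (idp v) = kp v;
  KP1a : forall v, kp v * kp v = kp v;
  KP1b : forall v w, v <> w -> kp v * kp w = 0;
  KP2a : forall l m, sc l = rg m -> ks l * ks m = ks (pcat l m);
  KP2b : forall l m, sc l = rg m -> kss m * kss l = kss (pcat l m);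
  KP2c : forall l, kp (rg l) * ks l = ks l /\ ks l * kp (sc l) = ks l;
  KP2d : forall l, kp (sc l) * kss l = kss l /\ kss l * kp (rg l) = kss l;
  KP3a : forall l, kss l * ks l = kp (sc l);
  KP3b : forall l m, dg l = dg m -> l <> m -> kss l * ks m = 0;
  KP4 : forall (v : Vx L) (n : NN k), n <> nzero ->
      forall l : list (Pth L), NoDup l ->
      (forall lam, In lam l <-> (rg lam = v /\ dg lam = n)) ->
      kp v = \sum_(lam <- l) ks lam * kss lam
}.

Arguments ks {k L R A} _ _.
Arguments kss {k L R A} _ _.

(* An element of KP_R(Lambda), described as a function of the KP family,
   vanishes / two such coincide in KP_R(Lambda). *)
Definition KP_eq {k} (L : kgraph k) (R : comNzRingType)
  (e1 e2 : forall (A : algType R), KPfamily L A -> A) : Prop :=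
  forall (A : algType R) (S : KPfamily L A), e1 A S = e2 A S.

Arguments KP_eq {k} L R e1 e2.

Definition cycline {k} (L : kgraph k) (R : comNzRingType) (a b : Pth L) : Prop :=
  sc a = sc b /\
  forall g : Pth L, rg g = sc a ->
    KP_eq L R (fun A S => ks S (pcat a g) * kss S (pcat a g))
            (fun A S => ks S (pcat b g) * kss S (pcat b g)).

Arguments cycline {k} L R a b.

(* Infinite paths: degree-preserving functors Omega_k -> Lambda.        *)
(* The morphism (p,q) (p <= q) is sent to [ipath x p q]; values for     *)
(* p not <= q are irrelevant.                                           *)
Record infpath {k} (L : kgraph k) := InfPath {
  ipath : NN k -> NN k -> Pth L;
  ipath_id : forall p, ipath p p = idp (rg (ipath p p));
  ipath_dg : forall p q, nle p q -> dg (ipath p q) = nsub q p;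
  ipath_comp : forall p q t, nle p q -> nle q t ->
      sc (ipath p q) = rg (ipath q t) /\ pcat (ipath p q) (ipath q t) = ipath p t
}.

Arguments ipath {k L} _ _ _.

Definition Zcyl {k} {L : kgraph k} (mu : Pth L) (x : infpath L) : Prop :=
  ipath x nzero (dg mu) = mu.

Definition is_open {k} {L : kgraph k} (U : infpath L -> Prop) : Prop :=
  forall x, U x -> exists mu : Pth L, Zcyl mu x /\ forall y, Zcyl mu y -> U y.

Definition tinterior {k} {L : kgraph k} (F : infpath L -> Prop) (x : infpath L) : Prop :=
  exists U, is_open U /\ U x /\ forall y, U y -> F y.

Definition tclosure {k} {L : kgraph k} (F : infpath L -> Prop) (x : infpath L) : Prop :=
  forall U, is_open U -> U x -> exists y, U y /\ F y.

Definition boundary {k} {L : kgraph k} (F : infpath L -> Prop) (x : infpath L) : Prop :=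
  tclosure F x /\ ~ tinterior F x.

(* F_{alpha,beta} = { x in Z(alpha) cap Z(beta) : sigma^{d alpha} x = sigma^{d beta} x } ;
   equality of infinite paths = equality of the functors on all morphisms (m,n), m <= n. *)
Definition Fab {k} {L : kgraph k} (a b : Pth L) (x : infpath L) : Prop :=
  Zcyl a x /\ Zcyl b x /\
  forall m n : NN k, nle m n ->
    ipath x (nadd m (dg a)) (nadd n (dg a)) = ipath x (nadd m (dg b)) (nadd n (dg b)).

Definition inSigma {k} {L : kgraph k} (a b : Pth L) : Prop := sc a = sc b /\ a <> b.

Definition regular {k} {L : kgraph k} (x : infpath L) : Prop :=
  forall a b : Pth L, inSigma a b -> ~ boundary (Fab a b) x.

(* Main.v *)
Require Import Defs.
From HB Require Import structures.
From mathcomp Require Import all_boot all_order all_algebra.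
From Stdlib Require Import List.
From Stdlib Require Import Permutation Classical ClassicalEpsilon Lia.
From mathcomp Require Import zify.
Import GRing.Theory.
Local Open Scope ring_scope.

Lemma nadd0l {k} (m : NN k) : nadd nzero m = m. Proof. by apply/ffunP => i; rewrite !ffunE add0n. Qed.
Lemma naddC {k} (m n : NN k) : nadd m n = nadd n m. Proof. by apply/ffunP => i; rewrite !ffunE addnC. Qed.
Lemma nsub0 {k} (m : NN k) : nsub m nzero = m. Proof. by apply/ffunP => i; rewrite !ffunE subn0. Qed.
Lemma nsub_addl {k} (m n : NN k) : nsub (nadd m n) m = n. Proof. by apply/ffunP => i; rewrite !ffunE addKn. Qed.
Lemma nsub_addr {k} (m n : NN k) : nsub (nadd n m) m = n. Proof. by apply/ffunP => i; rewrite !ffunE addnK. Qed.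
Lemma nsubnn {k} (m : NN k) : nsub m m = nzero. Proof. by apply/ffunP => i; rewrite !ffunE subnn. Qed.
Lemma nadd_subK {k} {m n : NN k} : nle n m -> nadd n (nsub m n) = m.
Proof. by move=> H; apply/ffunP => i; rewrite !ffunE subnKC // H. Qed.
Lemma nsub_add2r {k} (m n p : NN k) : nsub (nadd n p) (nadd m p) = nsub n m.
Proof. by apply/ffunP => i; rewrite !ffunE subnDr. Qed.
Lemma nle0 {k} (m : NN k) : nle nzero m. Proof. by move=> i; rewrite ffunE. Qed.
Lemma nlenn {k} (m : NN k) : nle m m. Proof. by move=> i. Qed.
Lemma nle_addl {k} (m n : NN k) : nle m (nadd m n). Proof. by move=> i; rewrite ffunE leq_addr. Qed.
Lemma nle_addr {k} (m n : NN k) : nle m (nadd n m). Proof. by move=> i; rewrite ffunE leq_addl. Qed.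
Lemma nle_add2r {k} {m n : NN k} p : nle m n -> nle (nadd m p) (nadd n p).
Proof. by move=> H i; rewrite !ffunE leq_add2r. Qed.
Lemma nle_trans {k} {m n p : NN k} : nle m n -> nle n p -> nle m p.
Proof. by move=> H1 H2 i; apply: leq_trans (H1 i) (H2 i). Qed.

Section G.
Context {k : nat} {L : kgraph k}.

Lemma deg0_id (l : Pth L) : dg l = nzero -> l = idp (rg l).
Proof.
move=> H.
have [] := @factor_uniq _ L (idp (rg l)) l l (idp (sc l)).
- by rewrite sc_idp.
- by rewrite rg_idp.
- by rewrite dg_idp H.
- by rewrite dg_idp H.
- by rewrite pcomp_idl pcomp_idr.
by move=> ->.
Qed.

Lemma Zpre {l e : Pth L} {z : infpath L} : Zcyl (pcat l e) z -> sc l = rg e ->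
  Zcyl l z /\ ipath z (dg l) (nadd (dg l) (dg e)) = e.
Proof.
rewrite /Zcyl => Hz He; rewrite dg_comp // in Hz.
have [H1 H2] := ipath_comp z (nle0 (dg l)) (nle_addl (dg l) (dg e)).
have [] := @factor_uniq _ L _ _ l e H1 He _ _ (etrans H2 Hz).
- rewrite ipath_dg; last exact: nle0. exact: nsub0.
- rewrite ipath_dg; last exact: nle_addl. exact: nsub_addl.
by [].
Qed.

Lemma Zcat {l : Pth L} {z q} : Zcyl l z -> nle (dg l) q ->
  sc l = rg (ipath z (dg l) q) /\ pcat l (ipath z (dg l) q) = ipath z nzero q.
Proof.
rewrite /Zcyl => Hz Hq.
have := ipath_comp z (nle0 (dg l)) Hq. by rewrite Hz.
Qed.

Definition shift (a b : Pth L) (y : infpath L) :=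
  forall m n : NN k, nle m n ->
    ipath y (nadd m (dg a)) (nadd n (dg a)) = ipath y (nadd m (dg b)) (nadd n (dg b)).

Lemma Zshift {a b d : Pth L} {z} : Zcyl (pcat a d) z -> sc a = rg d ->
  Zcyl b z -> sc b = rg d -> shift a b z -> Zcyl (pcat b d) z.
Proof.
move=> Had Ha Hb Hbd Hs.
have [_ E1] := Zpre Had Ha.
have := Hs nzero (dg d) (nle0 _). rewrite !nadd0l (naddC (dg d)) (naddC (dg d)) E1 => E2.
have [_ E3] := Zcat Hb (nle_addl (dg b) (dg d)).
rewrite /Zcyl dg_comp // -E3 -E2 //.
Qed.


Definition pre (s : Pth L) (n : NN k) : Pth L :=
  epsilon (inhabits s) (fun a => exists b, sc a = rg b /\ dg a = n /\ pcat a b = s).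
Definition suf (s : Pth L) (n : NN k) : Pth L :=
  epsilon (inhabits s) (fun b => sc (pre s n) = rg b /\ dg b = nsub (dg s) n /\ pcat (pre s n) b = s).

Lemma presuf_spec {s n} : nle n (dg s) ->
  sc (pre s n) = rg (suf s n) /\ dg (pre s n) = n /\ dg (suf s n) = nsub (dg s) n
  /\ pcat (pre s n) (suf s n) = s.
Proof.
move=> Hn.
have [mu [nu [H1 [H2 [H3 H4]]]]] := factor_ex (esym (nadd_subK Hn)).
have [b [Hb1 [Hb2 Hb3]]] : exists b, sc (pre s n) = rg b /\ dg (pre s n) = n /\ pcat (pre s n) b = s.
  rewrite /pre; apply: (epsilon_spec (inhabits s) (fun a => exists b, sc a = rg b /\ dg a = n /\ pcat a b = s)).
  by exists mu, nu.
have : sc (pre s n) = rg (suf s n) /\ dg (suf s n) = nsub (dg s) n /\ pcat (pre s n) (suf s n) = s.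
  rewrite /suf; apply: (epsilon_spec (inhabits s) (fun b => sc (pre s n) = rg b /\ dg b = nsub (dg s) n /\ pcat (pre s n) b = s)).
  exists b; split => //; split => //.
  by rewrite -Hb3 dg_comp // Hb2 nsub_addl.
by move=> [? [? ?]]; split.
Qed.

Lemma presuf_uniq {s n a b} : sc a = rg b -> dg a = n -> pcat a b = s ->
  pre s n = a /\ suf s n = b.
Proof.
move=> Hab Ha Hs.
have Hn : nle n (dg s) by rewrite -Hs dg_comp // Ha; apply: nle_addl.
have [H1 [H2 [H3 H4]]] := presuf_spec Hn.
apply: (factor_uniq H1 Hab) => //.
- by rewrite H2.
- by rewrite H3 -Hs dg_comp // Ha nsub_addl.
- by rewrite H4.
Qed.

Lemma pre_ext {s e n} : sc s = rg e -> nle n (dg s) ->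
  pre (pcat s e) n = pre s n /\ suf (pcat s e) n = pcat (suf s n) e.
Proof.
move=> He Hn.
have [H1 [H2 [H3 H4]]] := presuf_spec Hn.
have Hse : sc (suf s n) = rg e by rewrite -He -{2}H4 sc_comp.
apply: presuf_uniq => //.
- by rewrite rg_comp.
- by rewrite -comp_assoc // H4.
Qed.

Lemma suf_pre {t p q} : nle p q -> nle q (dg t) ->
  sc (suf (pre t q) p) = rg (suf t q) /\ pcat (suf (pre t q) p) (suf t q) = suf t p.
Proof.
move=> Hpq Hqt.
have [H1 [H2 [H3 H4]]] := presuf_spec Hqt.
have Hp : nle p (dg (pre t q)) by rewrite H2.
have [G1 [G2 [G3 G4]]] := presuf_spec Hp.
have Hc : sc (suf (pre t q) p) = rg (suf t q) by rewrite -H1 -{2}G4 sc_comp.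
split => //.
have Hs1 : sc (pre (pre t q) p) = rg (pcat (suf (pre t q) p) (suf t q)) by rewrite rg_comp.
have Hs3 : pcat (pre (pre t q) p) (pcat (suf (pre t q) p) (suf t q)) = t by rewrite -comp_assoc // G4.
by have [_ ->] := presuf_uniq Hs1 G2 Hs3.
Qed.

Lemma pre_full s : pre s (dg s) = s.
Proof. by have [->] := @presuf_uniq s (dg s) s (idp (sc s)) (esym (rg_idp _)) erefl (pcomp_idr _). Qed.

Lemma suf_zero s : suf s nzero = s.
Proof. by have [_ ->] := @presuf_uniq s nzero (idp (rg s)) s (sc_idp _) (dg_idp _) (pcomp_idl _). Qed.

Definition one : NN k := [ffun => 1%N].

Definition extv (hL : row_finite_no_sources L) (v : Vx L) : Pth L :=
  proj1_sig (constructive_indefinite_description _ (proj2 (hL v one))).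

Lemma extv_spec hL v : rg (extv hL v) = v /\ dg (extv hL v) = one.
Proof. exact: (proj2_sig (constructive_indefinite_description _ (proj2 (hL v one)))). Qed.

Fixpoint sq hL (r : Pth L) (j : nat) : Pth L :=
  match j with
  | 0 => r
  | j'.+1 => pcat (sq hL r j') (extv hL (sc (sq hL r j')))
  end.

Lemma sq_dg hL r j : dg (sq hL r j) = [ffun i => (dg r i + j)%N].
Proof.
elim: j => [|j IH] /=.
  by apply/ffunP => i; rewrite ffunE addn0.
have [E1 E2] := extv_spec hL (sc (sq hL r j)).
rewrite dg_comp ?E1 // IH E2; apply/ffunP => i; by rewrite !ffunE addn1 addnS.
Qed.

Lemma sq_pre hL r j j' : exists e, sc (sq hL r j) = rg e /\ sq hL r (j + j') = pcat (sq hL r j) e.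
Proof.
elim: j' => [|j' [e [He1 He2]]].
  by exists (idp (sc (sq hL r j))); rewrite rg_idp addn0 pcomp_idr.
rewrite addnS /=.
set f := extv hL (sc (sq hL r (j + j'))).
have Hf : sc e = rg f.
  by rewrite /f (proj1 (extv_spec _ _)) He2 sc_comp.
exists (pcat e f); split; first by rewrite rg_comp.
by rewrite He2 comp_assoc.
Qed.

Definition Jn (q : NN k) : nat := (\sum_(i < k) q i)%N.

Lemma J_le hL r {q j} : (Jn q <= j)%N -> nle q (dg (sq hL r j)).
Proof.
move=> H i; rewrite sq_dg ffunE.
have Hi : (q i <= Jn q)%N by rewrite /Jn (bigD1 i) //= leq_addr.
exact: (leq_trans Hi (leq_trans H (leq_addl _ _))).
Qed.

Definition ip hL r (p q : NN k) : Pth L := suf (pre (sq hL r (Jn q)) q) p.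

Lemma ip_pre hL r {q j} : (Jn q <= j)%N -> pre (sq hL r j) q = pre (sq hL r (Jn q)) q.
Proof.
move=> H.
have [e [He1 He2]] := sq_pre hL r (Jn q) (j - Jn q).
rewrite subnKC // in He2.
rewrite He2; exact: (proj1 (pre_ext He1 (J_le hL r (leqnn (Jn q))))).
Qed.

Lemma ip_dg hL r p q : nle p q -> dg (ip hL r p q) = nsub q p.
Proof.
move=> Hpq.
have [_ [H2 _]] := presuf_spec (J_le hL r (leqnn (Jn q))).
have Hp : nle p (dg (pre (sq hL r (Jn q)) q)) by rewrite H2.
have [_ [_ [H3 _]]] := presuf_spec Hp.
by rewrite /ip H3 H2.
Qed.

Lemma ip_id hL r p : ip hL r p p = idp (rg (ip hL r p p)).
Proof. by apply: deg0_id; rewrite ip_dg ?nsubnn //; apply: nlenn. Qed.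

Lemma ip_comp hL r p q t : nle p q -> nle q t ->
  sc (ip hL r p q) = rg (ip hL r q t) /\ pcat (ip hL r p q) (ip hL r q t) = ip hL r p t.
Proof.
move=> Hpq Hqt.
set M := (Jn q + Jn t)%N.
rewrite /ip -(ip_pre hL r (leq_addr (Jn t) (Jn q))) -(ip_pre hL r (leq_addl (Jn q) (Jn t))).
fold M.
have Ht : nle t (dg (sq hL r M)) by apply: J_le; apply: leq_addl.
have [H1 [H2 [H3 H4]]] := presuf_spec Ht.
have Hq : nle q (dg (pre (sq hL r M) t)) by rewrite H2.
have Eq : pre (sq hL r M) q = pre (pre (sq hL r M) t) q.
  by rewrite -{1}H4; exact: (proj1 (pre_ext H1 Hq)).
rewrite Eq.
exact: suf_pre.
Qed.

Lemma extend (hL : row_finite_no_sources L) (r : Pth L) : exists z : infpath L, Zcyl r z.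
Proof.
exists (InfPath (ip_id hL r) (ip_dg hL r) (ip_comp hL r)).
rewrite /Zcyl /= /ip.
have [e [He1 He2]] := sq_pre hL r 0 (Jn (dg r)).
rewrite add0n /= in He2.
rewrite He2.
have [-> _] := pre_ext (n := dg r) He1 (nlenn _).
by rewrite pre_full suf_zero.
Qed.

End G.

Section Alg.
Context {k : nat} {L : kgraph k} {R : comNzRingType} {A : algType R} (S : KPfamily L A).

Lemma sum_ext_in (T : Type) (F G : T -> A) (l : list T) :
  (forall e, In e l -> F e = G e) -> \sum_(e <- l) F e = \sum_(e <- l) G e.
Proof.
elim: l => [|a l IH] H; first by rewrite !big_nil.
rewrite !big_cons H /=; last by left.
by rewrite IH // => e He; apply: H; right.
Qed.

Lemma sum_perm (T : Type) (F : T -> A) (l1 l2 : list T) :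
  Permutation l1 l2 -> \sum_(e <- l1) F e = \sum_(e <- l2) F e.
Proof.
elim => [|x l l' _ IH|x y l|l l' l'' _ IH1 _ IH2].
- by [].
- by rewrite !big_cons IH.
- by rewrite !big_cons addrCA.
- by rewrite IH1 IH2.
Qed.

Lemma sum_map (T U : Type) (f : T -> U) (F : U -> A) (l : list T) :
  \sum_(e <- List.map f l) F e = \sum_(e <- l) F (f e).
Proof. by elim: l => [|a l IH]; rewrite ?big_nil //= !big_cons IH. Qed.

Lemma expand {lam : Pth L} {n l} : n <> nzero -> NoDup l ->
  (forall e, In e l <-> rg e = sc lam /\ dg e = n) ->
  ks S lam * kss S lam = \sum_(e <- l) ks S (pcat lam e) * kss S (pcat lam e).
Proof.
move=> Hn Hnd Hl.
have H := KP4 S Hn Hnd Hl.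
have [_ E] := KP2c S lam.
rewrite -{1}E H big_distrr big_distrl /=.
apply: sum_ext_in => e /Hl [He _].
by rewrite !mulrA (KP2a S) // -mulrA (KP2b S).
Qed.

End Alg.

Section Main.
Context {k : nat} {L : kgraph k}.

Lemma nodup_map_cat {lam : Pth L} {n l} : NoDup l ->
  (forall e, In e l -> rg e = sc lam /\ dg e = n) -> NoDup (List.map (pcat lam) l).
Proof.
elim: l => [|a l IH] Hnd Hl /=; first by constructor.
move/NoDup_cons_iff: Hnd => [Ha Hnd].
constructor; last by apply: IH => // e He; apply: Hl; right.
move/in_map_iff => [e [Ee He]].
have [Hea Hen] := Hl e (or_intror He).
have [Haa Han] := Hl a (or_introl erefl).
have [_ E] := factor_uniq (esym Hea) (esym Haa) erefl (etrans Hen (esym Han)) Ee.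
by apply: Ha; rewrite -E.
Qed.

Lemma getlist (hL : row_finite_no_sources L) (v : Vx L) (n : NN k) :
  exists l, NoDup l /\ forall e, In e l <-> rg e = v /\ dg e = n.
Proof.
have [[l Hl] _] := hL v n.
exists (nodup (fun x y => excluded_middle_informative (x = y)) l); split.
  exact: NoDup_nodup.
by move=> e; rewrite nodup_In.
Qed.

Lemma incl_ext (hL : row_finite_no_sources L) {lam lam' e : Pth L} {D} :
  (forall z, Zcyl lam z -> Zcyl lam' z) -> nle (dg lam) D -> nle (dg lam') D ->
  rg e = sc lam -> dg e = nsub D (dg lam) ->
  exists e', rg e' = sc lam' /\ dg e' = nsub D (dg lam') /\ pcat lam e = pcat lam' e'.
Proof.
move=> H12 H1 H2 He1 He2.
have [z Hz] := extend hL (pcat lam e).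
have [Zl _] := Zpre Hz (esym He1).
have Zl' := H12 z Zl.
have [C1 C2] := Zcat Zl' H2.
exists (ipath z (dg lam') D); split; first by rewrite -C1.
split; first by rewrite ipath_dg.
rewrite C2 -Hz /Zcyl dg_comp ?He2 ?nadd_subK //.
Qed.

Lemma proj_eq (hL : row_finite_no_sources L) (hk : (0 < k)%N) (lam lam' : Pth L)
  (H12 : forall z, Zcyl lam z -> Zcyl lam' z) (H21 : forall z, Zcyl lam' z -> Zcyl lam z)
  (R : comNzRingType) (A : algType R) (S : KPfamily L A) :
  ks S lam * kss S lam = ks S lam' * kss S lam'.
Proof.
set D := nadd (nadd (dg lam) (dg lam')) one.
have HD1 : nle (dg lam) D by move=> i; rewrite !ffunE -addnA leq_addr.
have HD2 : nle (dg lam') D by move=> i; rewrite !ffunE addnC addnA leq_addl.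
have nz1 : nsub D (dg lam) <> nzero.
  move=> E; have := congr1 (fun f : NN k => f (Ordinal hk)) E.
  by rewrite !ffunE -addnA addKn addn1.
have nz2 : nsub D (dg lam') <> nzero.
  move=> E; have := congr1 (fun f : NN k => f (Ordinal hk)) E.
  by rewrite !ffunE (addnC (dg lam _)) -addnA addKn addn1.
have [l1 [N1 Hl1]] := getlist hL (sc lam) (nsub D (dg lam)).
have [l2 [N2 Hl2]] := getlist hL (sc lam') (nsub D (dg lam')).
rewrite (expand S nz1 N1 Hl1) (expand S nz2 N2 Hl2).
rewrite -(sum_map _ _ (pcat lam) (fun x => ks S x * kss S x)).
rewrite -(sum_map _ _ (pcat lam') (fun x => ks S x * kss S x)).
apply: sum_perm; apply: NoDup_Permutation.
- by apply: (nodup_map_cat N1) => e He; exact: (proj1 (Hl1 e) He).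
- by apply: (nodup_map_cat N2) => e He; exact: (proj1 (Hl2 e) He).
move=> x; split => /in_map_iff [e [<- He]]; apply/in_map_iff.
- have [Ee1 Ee2] := proj1 (Hl1 e) He.
  have [e' [E1 [E2 E3]]] := incl_ext hL H12 HD1 HD2 Ee1 Ee2.
  by exists e'; split => //; apply/Hl2.
- have [Ee1 Ee2] := proj1 (Hl2 e) He.
  have [e' [E1 [E2 E3]]] := incl_ext hL H21 HD2 HD1 Ee1 Ee2.
  by exists e'; split => //; apply/Hl1.
Qed.

End Main.

Lemma incl_ab {k} {L : kgraph k} {a b g h mu r : Pth L} {z} : sc a = rg g -> sc b = rg g -> sc g = rg h ->
  pcat a g = pcat mu r -> sc mu = rg r ->
  (forall y, Zcyl mu y -> Zcyl b y /\ shift a b y) ->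
  Zcyl (pcat (pcat a g) h) z -> Zcyl (pcat (pcat b g) h) z.
Proof.
move=> Hag Hbg Hgh Emu Hmr HF Hz.
have Hagh : sc (pcat a g) = rg h by rewrite sc_comp.
have [Zag _] := Zpre Hz Hagh.
rewrite Emu in Zag. have [Zmu _] := Zpre Zag Hmr.
have [Zb Hs] := HF z Zmu.
rewrite comp_assoc // in Hz.
have H1 : sc a = rg (pcat g h) by rewrite rg_comp.
have H2 : sc b = rg (pcat g h) by rewrite rg_comp.
have := Zshift Hz H1 Zb H2 Hs.
by rewrite -comp_assoc.
Qed.

Theorem lemma5p3 (k : nat) (L : kgraph k) (R : comNzRingType)
  (hL : row_finite_no_sources L)
  (a b : Pth L) (hab : inSigma a b) (x : infpath L) (hx : regular x) :
  (~ Fab a b x ->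
     exists mu nu : Pth L, Zcyl mu x /\ Zcyl nu x /\
       KP_eq L R (fun A S => ks S mu * kss S mu * ks S a * kss S b * ks S nu * kss S nu)
               (fun A S => 0))
  /\
  (Fab a b x ->
     exists g : Pth L, rg g = sc a /\
       Zcyl (pcat a g) x /\ Zcyl (pcat b g) x /\
       KP_eq L R (fun A S => ks S (pcat a g) * kss S (pcat a g) * ks S a * kss S b
                            * ks S (pcat b g) * kss S (pcat b g))
               (fun A S => ks S (pcat a g) * kss S (pcat b g)) /\
       cycline L R (pcat a g) (pcat b g)).
Proof.
have Hsym : sc a = sc b := proj1 hab.
split.
- move=> hF.
  case: (classic (Zcyl a x)) => Za; last first.
    set mu := ipath x nzero (dg a).
    have dmu : dg mu = dg a.
      rewrite /mu ipath_dg; [exact: nsub0 | exact: nle0].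
    have Zmu : Zcyl mu x by rewrite /Zcyl dmu.
    exists mu, mu; split => //; split => //.
    move=> A S /=.
    have H0 : kss S mu * ks S a = 0.
      apply: (KP3b S); first exact: dmu.
      by move=> E; apply: Za; rewrite -E.
    by rewrite -(mulrA (ks S mu)) H0 mulr0 !mul0r.
  case: (classic (Zcyl b x)) => Zb; last first.
    set nu := ipath x nzero (dg b).
    have dnu : dg nu = dg b.
      rewrite /nu ipath_dg; [exact: nsub0 | exact: nle0].
    have Znu : Zcyl nu x by rewrite /Zcyl dnu.
    exists nu, nu; split => //; split => //.
    move=> A S /=.
    have H0 : kss S b * ks S nu = 0.
      apply: (KP3b S); first exact: (esym dnu).
      by move=> E; apply: Zb; rewrite E.
    by rewrite -(mulrA _ (kss S b)) H0 mulr0 mul0r.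
  have [m [n [Hmn Hne]]] : exists m n, nle m n /\
      ipath x (nadd m (dg a)) (nadd n (dg a)) <> ipath x (nadd m (dg b)) (nadd n (dg b)).
    apply: NNPP => Hc; apply: hF; split => //; split => //.
    move=> m n Hmn; apply: NNPP => Hne; apply: Hc; by exists m, n.
  set mu2 := ipath x (dg a) (nadd n (dg a)).
  set nu2 := ipath x (dg b) (nadd n (dg b)).
  have [Ca1 Ca2] := Zcat Za (nle_addr (dg a) n).
  have [Cb1 Cb2] := Zcat Zb (nle_addr (dg b) n).
  have Dmu2 : dg mu2 = n by rewrite /mu2 ipath_dg ?nsub_addr //; apply: nle_addr.
  have Dnu2 : dg nu2 = n by rewrite /nu2 ipath_dg ?nsub_addr //; apply: nle_addr.
  have Hmn2 : mu2 <> nu2.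
    move=> E.
    have [P1 P2] := ipath_comp x (nle_addr (dg a) m) (nle_add2r (dg a) Hmn).
    have [Q1 Q2] := ipath_comp x (nle_addr (dg b) m) (nle_add2r (dg b) Hmn).
    have [_ Heq] := factor_uniq P1 Q1
      (etrans (ipath_dg _ (nle_addr _ _)) (etrans (nsub_addr _ _) (esym (etrans (ipath_dg _ (nle_addr _ _)) (nsub_addr _ _)))))
      (etrans (ipath_dg _ (nle_add2r _ Hmn)) (etrans (nsub_add2r _ _ _) (esym (etrans (ipath_dg _ (nle_add2r _ Hmn)) (nsub_add2r _ _ _)))))
      (etrans P2 (etrans E (esym Q2))).
    exact: Hne Heq.
  exists (ipath x nzero (nadd n (dg a))), (ipath x nzero (nadd n (dg b))).
  split; first by rewrite /Zcyl ipath_dg ?nsub0 //; apply: nle0.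
  split; first by rewrite /Zcyl ipath_dg ?nsub0 //; apply: nle0.
  move=> A S /=.
  rewrite -Ca2 -Cb2 -(KP2b S Ca1) -(KP2a S Cb1).
  have E3 : kss S mu2 * ks S nu2 = 0 by apply: (KP3b S) => //; rewrite Dmu2 Dnu2.
  rewrite -!mulrA (mulrA (kss S a)) (KP3a S) (mulrA (kss S mu2)) Ca1 (proj2 (KP2d S mu2)).
  rewrite (mulrA (kss S b)) (KP3a S) (mulrA (kss S mu2)) -Hsym Ca1 (proj2 (KP2d S mu2)).
  by rewrite (mulrA (kss S mu2)) E3 mul0r mulr0.
- move=> hF.
  have [Za [Zb Hs]] := hF.
  have [U [HU [Ux HUF]]] : tinterior (Fab a b) x.
    apply: NNPP => Hn; apply: (hx a b hab); split => //.
    by move=> U _ HUx; exists x; split.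
  have [mu [Zmu Hmu]] := HU x Ux.
  have HmuF : forall y, Zcyl mu y -> Fab a b y := fun y Hy => HUF y (Hmu y Hy).
  case: (posnP k) => hk.
    exfalso.
    have all0 : forall d : NN k, d = nzero.
      by move=> d; apply/ffunP => -[i hi]; exfalso; move: hi; rewrite hk.
    have ha := @deg0_id _ _ a (all0 _).
    have hb := @deg0_id _ _ b (all0 _).
    have sa : sc a = rg a by rewrite {1}ha sc_idp.
    have sb : sc b = rg b by rewrite {1}hb sc_idp.
    apply: (proj2 hab); rewrite ha hb -sa -sb Hsym //.
  set g := ipath x (dg a) (nadd (dg mu) (dg a)).
  have [Ga1 Ga2] := Zcat Za (nle_addr (dg a) (dg mu)).
  have Eg : g = ipath x (dg b) (nadd (dg mu) (dg b)).
    by have := Hs nzero (dg mu) (nle0 _); rewrite !nadd0l.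
  have [Gb1 Gb2] := Zcat Zb (nle_addr (dg b) (dg mu)).
  rewrite -Eg in Gb1 Gb2.
  have dgg : dg g = dg mu by rewrite /g ipath_dg ?nsub_addr //; apply: nle_addr.
  exists g; split; first by rewrite -Ga1.
  split; first by rewrite /Zcyl dg_comp // dgg naddC Ga2.
  split; first by rewrite /Zcyl dg_comp // dgg naddC Gb2.
  split.
    move=> A S /=.
    rewrite -(KP2b S Ga1) -(KP2a S Gb1).
    rewrite -!mulrA (mulrA (kss S a)) (KP3a S) (mulrA (kss S b)) (KP3a S) -Hsym.
    rewrite (mulrA (kp S (sc a))) (KP1a S) (mulrA (kss S g)) Ga1 (proj2 (KP2d S g)).
    rewrite (mulrA (kss S g)) (KP3a S) mulrA -(sc_comp Ga1) (proj2 (KP2c S (pcat a g))) //.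
  split; first by rewrite (sc_comp Ga1) (sc_comp Gb1).
  move=> h Hh A S.
  rewrite (sc_comp Ga1) in Hh.
  have [M1 M2] := Zcat Zmu (nle_addl (dg mu) (dg a)).
  have [M1' M2'] := Zcat Zmu (nle_addl (dg mu) (dg b)).
  apply: (proj_eq hL hk) => z.
  - apply: (incl_ab Ga1 Gb1 (esym Hh) (etrans Ga2 (esym M2)) M1).
    by move=> y /HmuF [_ [Zby Hsy]].
  - apply: (incl_ab Gb1 Ga1 (esym Hh) (etrans Gb2 (esym M2')) M1').
    move=> y /HmuF [Zay [_ Hsy]]; split => // m' n' H'; exact: (esym (Hsy m' n' H')).
Qed.
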